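(* Let $I\in[0,1)$, let $Z\ge 0$ and $L\ge 1$ be integers, and define $$P_s^{(TR)}(L)=1-\sum_{k=0}^{Z+1}\binom{k+Z}{k}I^k(1-I)^{Z+1}\Big[1-Q(L,Z+1-k,0)\Big],$$ $$P_s^{(TU)}=1-\sum_{k=0}^{Z+1}\binom{k+Z}{k}I^k(1-I)^{Z+1}\Big[1-P(Z+1-k)\Big].$$ Then: (i) if $0<I<1$, $P_s^{(TR)}(L)$ is strictly increasing in $L$; (ii) for every $L\ge1$, $P_s^{(TR)}(L)\le P_s^{(TU)}$, and the inequality is strict when $0<I<1$; (iii) $P_s^{(TR)}(L)<1$ for every $L\ge1$ whenever $0\le I<1$ (in particular also when $0.5\le I<1$, where $P_s^{(TU)}=1$).
   Context: Fix $I\in[0,1)$ (the probability that the next mined block is produced by the attacker). Let $\delta_1,\delta_2,\dots$ be i.i.d. random vectors in $\mathbb{Z}^2$ with $\delta_t=[-1,0]^T$ with probability $I$ and $\delta_t=[1,1]^T$ with probability $1-I$; for a starting point $[m,n]^T$ let $s_T=[m,n]^T+\sum_{t=1}^T\delta_t$. With $\mathcal{L}_1=\{[m',n']^T: m'=-1\}$ and $\mathcal{L}_2=\{[m',n']^T: n'=l\}$, let $$Q(l,m,n)=\sum_{T=0}^{\infty}\Pr\big(s_T\in\mathcal{L}_1,\ s_{T'}\notin\mathcal{L}_1\cup\mathcal{L}_2\ \forall\, T'<T\big)$$ be the probability that the walk hits $\mathcal{L}_1$ before $\mathcal{L}_2$. Let $P(m)=\left(\frac{I}{1-I}\right)^{m+1}$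 if $0\le I<0.5$ and $P(m)=1$ if $0.5\le I\le1$. $P_s^{(TR)}(L)$ is the success probability of a time-restricted double-spending attack (confirmation depth $Z$, attacker gives up once the honest branch has grown $L$ blocks past confirmation), and $P_s^{(TU)}$ that of the time-unrestricted attack. *)

(* Defs.v *)
From HB Require Import structures.
From mathcomp Require Import all_boot all_order all_algebra.
From mathcomp Require Import all_classical all_reals all_analysis.
Set Implicit Arguments. Unset Strict Implicit. Unset Printing Implicit Defensive.
Import Order.TTheory GRing.Theory Num.Theory.
Local Open Scope ring_scope.

(* A step: true = attacker block, delta = [-1,0]; false = honest, delta = [1,1]. *)
Definition delta (b : bool) : int * int := if b then (-1, 0) else (1, 1).

Definition pos (m n : int) (w : seq bool) : int * int :=
  foldl (fun p b => (p.1 + (delta b).1, p.2 + (delta b).2)) (m, n) w.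

Definition inL1 (p : int * int) : bool := p.1 == -1.
Definition inL2 (l : int) (p : int * int) : bool := p.2 == l.

Definition path_weight (R : realType) (I : R) (w : seq bool) : R :=
  \prod_(b <- w) (if b then I else 1 - I).

Definition first_hit_L1 (l m n : int) (T : nat) (w : T.-tuple bool) : bool :=
  inL1 (pos m n w) &&
  [forall t : 'I_T, ~~ (inL1 (pos m n (take t w)) || inL2 l (pos m n (take t w)))].

Definition hit_prob (R : realType) (I : R) (l m n : int) (T : nat) : R :=
  \sum_(w : T.-tuple bool) path_weight I w * (first_hit_L1 l m n w)%:R.

Definition Q (R : realType) (I : R) (l m n : int) : R :=
  \big[+%R/0]_(0 <= T <oo) hit_prob I l m n T.

Definition Pfun (R : realType) (I : R) (m : nat) : R :=
  if I < 1 / 2 then (I / (1 - I)) ^+ m.+1 else 1.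

Definition Ps_TR (R : realType) (I : R) (Z : nat) (L : int) : R :=
  1 - \sum_(k < Z.+2) ('C(k + Z, k))%:R * I ^+ k * (1 - I) ^+ Z.+1
        * (1 - Q I L (Z.+1 - k)%N 0).

Definition Ps_TU (R : realType) (I : R) (Z : nat) : R :=
  1 - \sum_(k < Z.+2) ('C(k + Z, k))%:R * I ^+ k * (1 - I) ^+ Z.+1
        * (1 - Pfun I (Z.+1 - k)%N).

(* Main.v *)
Require Import Defs.
From HB Require Import structures.
From mathcomp Require Import all_boot all_order all_algebra.
From mathcomp Require Import all_classical all_reals all_analysis.
From mathcomp Require Import zify ring lra.
Import Order.TTheory GRing.Theory Num.Theory.
Local Open Scope ring_scope.
Set Implicit Arguments.

Definition bad (l : int) (p : int * int) := inL1 p || inL2 l p.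

Definition fh (l m n : int) (w : seq bool) : bool :=
  inL1 (pos m n w) && all (fun t => ~~ bad l (pos m n (take t w))) (iota 0 (size w)).

Lemma first_hitE l m n T (w : T.-tuple bool) : first_hit_L1 l m n w = fh l m n w.
Proof.
rewrite /first_hit_L1 /fh size_tuple; congr (_ && _).
apply/forallP/allP => H.
- move=> t; rewrite mem_iota add0n => /andP[_ ht]; exact: (H (Ordinal ht)).
- move=> t; apply: H; rewrite mem_iota add0n; exact: ltn_ord.
Qed.

Lemma posS m n b w : pos m n (b :: w) = pos (m + (delta b).1) (n + (delta b).2) w.
Proof. by []. Qed.

Lemma fhS l m n b w : fh l m n (b :: w) =
  ~~ bad l (m, n) && fh l (m + (delta b).1) (n + (delta b).2) w.
Proof.
rewrite /fh /= -posS.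
rewrite -(addn0 1%N) iotaDl all_map.
rewrite andbCA; congr (_ && _); congr (_ && _).

Qed.

Lemma sum_tupleS (R : realType) T (F : seq bool -> R) :
  \sum_(w : T.+1.-tuple bool) F w = \sum_(b : bool) \sum_(w : T.-tuple bool) F (b :: w).
Proof.
rewrite pair_big /=.
rewrite (reindex (fun p : bool * T.-tuple bool => [tuple of p.1 :: p.2])) /=.
  by [].
exists (fun w : T.+1.-tuple bool => (thead w, [tuple of behead w])).
  by move=> [b w] _ /=; congr pair; apply: val_inj.
by move=> w _; rewrite [RHS]tuple_eta; apply: val_inj.
Qed.
Section S.
Variables (R : realType) (I : R) (l : int).

Lemma hit0 m n : hit_prob I l m n 0 = (inL1 (m, n))%:R.
Proof.
rewrite /hit_prob (big_pred1 [tuple]); last by move=> w; apply/esym/eqP; apply: val_inj; case: w => [[]].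
rewrite first_hitE /fh /path_weight /= big_nil mul1r andbT //.
Qed.

Lemma hitS m n T : hit_prob I l m n T.+1 =
  if bad l (m, n) then 0 else
  I * hit_prob I l (m + (delta true).1) (n + (delta true).2) T +
  (1 - I) * hit_prob I l (m + (delta false).1) (n + (delta false).2) T.
Proof.
rewrite /hit_prob.
under eq_bigr => w _ do rewrite first_hitE.
rewrite (@sum_tupleS R T (fun w => path_weight I w * (fh l m n w)%:R)) big_bool /=.
case: ifP => hb.
  rewrite !big1 ?addr0 // => w _; by rewrite fhS hb mulr0.
rewrite !mulr_sumr; congr (_ + _); apply: eq_bigr => w _;
  rewrite !first_hitE fhS hb /= /path_weight big_cons mulrA //.
Qed.

Fixpoint s (N : nat) (m n : int) : R :=
  match N with
  | 0 => 0
  | N.+1 => (inL1 (m, n))%:R + (if bad l (m, n) then 0 else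
      I * s N (m + (delta true).1) (n + (delta true).2) +
      (1 - I) * s N (m + (delta false).1) (n + (delta false).2))
  end.

Lemma sum_hit N m n : \sum_(T < N) hit_prob I l m n T = s N m n.
Proof.
elim: N m n => [|N IH] m n; first by rewrite big_ord0.
rewrite big_ord_recl hit0 /=; congr (_ + _).
under eq_bigr => i _ do rewrite /bump /= hitS.
case: ifP => _; first by rewrite big1.
by rewrite big_split /= -!mulr_sumr !IH.
Qed.
End S.
Arguments s {R}.
Section T.
Variables (R : realType) (I : R) (l : int).
Hypothesis (I0 : 0 <= I) (I1 : I < 1).

Lemma sS N m n : s I l N.+1 m n = (inL1 (m, n))%:R + (if bad l (m, n) then 0 else
      I * s I l N (m + (delta true).1) (n + (delta true).2) +
      (1 - I) * s I l N (m + (delta false).1) (n + (delta false).2)).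
Proof. by []. Qed.

Lemma badP m n : bad l (m, n) = false -> m <> -1 /\ n <> l.
Proof. by rewrite /bad /inL1 /inL2 /= => /negbT; rewrite negb_or => /andP[/eqP ? /eqP ?]. Qed.

Lemma stab N m n : -1 <= m -> n <= l -> 2 * (l - n) + m + 2 <= N%:Z ->
  s I l N.+1 m n = s I l N m n.
Proof.
elim: N m n => [|N IH] m n hm hn hN; first lia.
rewrite [LHS]sS [RHS]sS; case hb: (bad l (m, n)) => //.
have [h1 h2] := badP _ _ hb.
rewrite IH ?IH //=; lia.
Qed.

Lemma stab2 N M m n : -1 <= m -> n <= l -> 2 * (l - n) + m + 2 <= N%:Z -> (N <= M)%N ->
  s I l M m n = s I l N m n.
Proof.
move=> hm hn hN; elim: M => [|M IH] hM.
  by have -> : N = 0%N by lia.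
case: (ltngtP N M.+1) hM => // [hlt _|<- //].
rewrite stab // ?IH //; lia.
Qed.

Lemma Qeq N m n : -1 <= m -> n <= l -> 2 * (l - n) + m + 2 <= N%:Z ->
  Q I l m n = s I l N m n.
Proof.
move=> hm hn hN; rewrite /Q.
apply: norm_lim_near_cst.
near=> M.
rewrite big_mkord sum_hit (stab2 N) //.
near: M; exists N => // k /=; lia.
Unshelve. all: by end_near.
Qed.

Lemma s_ge0 N m n : 0 <= s I l N m n.
Proof.
elim: N m n => [|N IH] m n //=.
apply: addr_ge0 => //; case: ifP => // _.
apply: addr_ge0; apply: mulr_ge0; rewrite ?IH // subr_ge0; exact: ltW.
Qed.

Lemma s_le1 N m n : s I l N m n <= 1.
Proof.
elim: N m n => [|N IH] m n //=.
case hb: (bad l (m, n)).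
  by rewrite addr0; case: (inL1 _).
have [h1 _] := badP _ _ hb.
have -> : inL1 (m, n) = false by apply/eqP.
rewrite add0r.
have := IH (m + (delta true).1) (n + (delta true).2).
have := IH (m + (delta false).1) (n + (delta false).2).
move: (s _ _ _ _ _) (s _ _ _ _ _) => a b ha hb'.
have i0 := I0; have i1 := I1. nra.
Qed.

Lemma s_lt1 N m n : 0 <= m -> s I l N m n < 1.
Proof.
elim: N m n => [|N IH] m n hm //=.
have -> : inL1 (m, n) = false by rewrite /inL1 /=; apply/negbTE/eqP; lia.
rewrite add0r; case: ifP => // hb.
have := s_le1 N (m + (delta true).1) (n + (delta true).2).
have := IH (m + (delta false).1) (n + (delta false).2) ltac:(rewrite /=; lia).
move: (s _ _ _ _ _) (s _ _ _ _ _) => a b ha hb'.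
have i0 := I0; have i1 := I1. nra.
Qed.
End T.
Section U.
Variables (R : realType) (I : R).
Hypothesis (I0 : 0 <= I) (I1 : I < 1).

Lemma inL1F m n : m <> -1 -> inL1 (m, n) = false.
Proof. by move=> h; rewrite /inL1 /=; apply/negbTE/eqP. Qed.

Lemma key k (r := I / (1 - I)) : I * r ^+ k + (1 - I) * r ^+ k.+2 = r ^+ k.+1.
Proof.
have h : 1 - I != 0 by rewrite subr_eq0 eq_sym lt_eqF.
rewrite !exprS /r; field; exact: h.
Qed.

Lemma s_le_r (l : int) N (m' : nat) n : I < 1 / 2 ->
  s I l N (m'%:Z - 1) n <= (I / (1 - I)) ^+ m'.
Proof.
move=> Ih.
have r0 : 0 <= I / (1 - I) by apply: divr_ge0 => //; rewrite subr_ge0 ltW.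
elim: N m' n => [|N IH] m' n /=; first exact: exprn_ge0.
case: m' => [|k].
  by rewrite expr0 /bad /inL1 /= addr0.
have -> : inL1 ((k.+1)%:Z - 1, n) = false by apply: inL1F; lia.
case: ifP => _; first by rewrite add0r exprn_ge0.
rewrite add0r -key.
have -> : (k.+1)%:Z - 1 + -1 = k%:Z - 1 by lia.
have -> : (k.+1)%:Z - 1 + 1 = (k.+2)%:Z - 1 by lia.
apply: lerD; apply: ler_wpM2l; rewrite ?IH //; rewrite subr_ge0 ltW //.
Qed.

Lemma s_lt_r (l : int) N (m' : nat) n : 0 < I -> I < 1 / 2 -> (0 < m')%N ->
  s I l N (m'%:Z - 1) n < (I / (1 - I)) ^+ m'.
Proof.
move=> Ip Ih.
have r0 : 0 < I / (1 - I) by apply: divr_gt0 => //; rewrite subr_gt0.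
elim: N m' n => [|N IH] m' n hm /=; first exact: exprn_gt0.
case: m' hm => [//|k] _.
have -> : inL1 ((k.+1)%:Z - 1, n) = false by apply: inL1F; lia.
case: ifP => _; first by rewrite add0r exprn_gt0.
rewrite add0r -key.
have -> : (k.+1)%:Z - 1 + -1 = k%:Z - 1 by lia.
have -> : (k.+1)%:Z - 1 + 1 = (k.+2)%:Z - 1 by lia.
apply: ler_ltD.
  by apply: ler_wpM2l => //; exact: s_le_r.
by rewrite ltr_pM2l ?IH // subr_gt0.
Qed.

Lemma s_ge_pow (l : int) N (m' : nat) n : (m' < N)%N -> n != l ->
  I ^+ m' <= s I l N (m'%:Z - 1) n.
Proof.
move=> + hn; elim: N m' n hn => [//|N IH] m' n hn hN /=.
case: m' hN => [|k] hN.
  by rewrite expr0 /inL1 /= addr0.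
have -> : inL1 ((k.+1)%:Z - 1, n) = false by apply: inL1F; lia.
have -> : bad l ((k.+1)%:Z - 1, n) = false.
  by rewrite /bad /inL2 /= (negbTE hn).
rewrite [false%:R]/= add0r.
have -> : (k.+1)%:Z - 1 + -1 = k%:Z - 1 by lia.
rewrite exprS -[X in X <= _]addr0; apply: lerD.
  by apply: ler_wpM2l => //; rewrite addr0; apply: IH.
apply: mulr_ge0; [rewrite subr_ge0; exact: ltW|exact: s_ge0].
Qed.

Lemma s_mono (l : int) N m n : n <= l -> s I l N m n <= s I (l + 1) N m n.
Proof.
elim: N m n => [|N IH] m n hn //=.
rewrite /bad /inL2 /=.
case: (inL1 (m, n)) => //=; apply: lerD => //.
have -> : (n == l + 1) = false by apply/negbTE/eqP; lia.
case: (eqVneq n l) => [_|/eqP hnl] /=.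
  apply: addr_ge0; apply: mulr_ge0; rewrite ?s_ge0 //; rewrite subr_ge0; exact: ltW.
apply: lerD; apply: ler_wpM2l.
- by [].
- by apply: IH; lia.
- by rewrite subr_ge0; exact: ltW.
- by apply: IH; lia.
Qed.

Lemma s_mono_lt (l : int) N m n : 0 < I -> 0 <= m -> n <= l ->
  2 * (l - n) + m + 2 <= N%:Z -> s I l N m n < s I (l + 1) N m n.
Proof.
move=> Ip; elim: N m n => [|N IH] m n hm hn hN; first lia.
rewrite /= /bad /inL2 /=.
have -> : inL1 (m, n) = false by apply: inL1F; lia.
rewrite /=; apply: ler_ltD => //.
have -> : (n == l + 1) = false by apply/negbTE/eqP; lia.
case: (eqVneq n l) => [enl|/eqP hnl] /=.
  case: m hm hN => [k|k] hm hN; last lia.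
  apply: ltr_pwDl; last first.
    apply: mulr_ge0; rewrite ?s_ge0 //; rewrite subr_ge0; exact: ltW.
  apply: mulr_gt0 => //.
  apply: (lt_le_trans (exprn_gt0 k Ip)).
  apply: s_ge_pow; [lia|].
  by apply/eqP; lia.
apply: ler_ltD.
  by apply: ler_wpM2l => //; apply: s_mono; lia.
rewrite ltr_pM2l ?subr_gt0 //; apply: IH; lia.
Qed.
End U.
Section V.
Variables (R : realType) (I : R) (Z : nat).
Hypothesis (I0 : 0 <= I) (I1 : I < 1).

Lemma sum_lt n (F G : 'I_n.+1 -> R) : (forall i, F i <= G i) -> F ord0 < G ord0 ->
  \sum_i F i < \sum_i G i.
Proof. by move=> h h0; rewrite !big_ord_recl; apply: ltr_leD => //; apply: ler_sum. Qed.

Definition c (k : 'I_Z.+2) : R := ('C(k + Z, k))%:R * I ^+ k * (1 - I) ^+ Z.+1.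

Lemma c_ge0 k : 0 <= c k.
Proof.
rewrite /c; apply: mulr_ge0; [apply: mulr_ge0|apply: exprn_ge0].
- exact: ler0n.
- exact: exprn_ge0.
- by rewrite subr_ge0; exact: ltW.
Qed.

Lemma c_gt0 k : 0 < I -> 0 < c k.
Proof.
move=> Ip; rewrite /c; apply: mulr_gt0; [apply: mulr_gt0|apply: exprn_gt0].
- by rewrite ltr0n bin_gt0 leq_addr.
- exact: exprn_gt0.
- by rewrite subr_gt0.
Qed.

Lemma c0_gt0 : 0 < c ord0.
Proof.
rewrite /c /= expr0 mulr1 bin0 mul1r; apply: exprn_gt0; by rewrite subr_gt0.
Qed.

Lemma QE (l : int) (mk : nat) N : 0 <= l -> 2 * l + mk%:Z + 4 <= N%:Z ->
  Q I l mk 0 = s I l N mk 0.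
Proof. move=> h1 h2; apply: Qeq; lia. Qed.

Definition NN (L : int) : nat := (2 * `|L| + Z + 10)%N.

Lemma NNb (L : int) (k : 'I_Z.+2) : 0 <= L -> 2 * (L + 1) + (Z.+1 - k)%N%:Z + 4 <= (NN L)%:Z.
Proof. move=> hL; have := ltn_ord k; rewrite /NN; lia. Qed.

Lemma PsTR_E (L : int) N : 0 <= L ->
  (forall k : 'I_Z.+2, 2 * L + (Z.+1 - k)%N%:Z + 4 <= N%:Z) -> Ps_TR I Z L =
  1 - \sum_(k < Z.+2) c k * (1 - s I L N (Z.+1 - k)%N 0).
Proof.
move=> hL hN; rewrite /Ps_TR; congr (_ - _); apply: eq_bigr => k _.
by rewrite (QE _ _ N).
Qed.

Lemma PsTU_E : Ps_TU I Z = 1 - \sum_(k < Z.+2) c k * (1 - Defs.Pfun I (Z.+1 - k)%N).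
Proof. by []. Qed.

Lemma sP l N (mk : nat) : s I l N mk 0 <= Defs.Pfun I mk.
Proof.
rewrite /Defs.Pfun; case: ifP => h; last exact: s_le1.
have -> : (mk%:Z) = (mk.+1)%:Z - 1 by lia.
exact: s_le_r.
Qed.

Lemma sP_lt l N (mk : nat) : 0 < I -> s I l N mk 0 < Defs.Pfun I mk.
Proof.
move=> Ip; rewrite /Defs.Pfun; case: ifP => h; last by apply: s_lt1.
have -> : (mk%:Z) = (mk.+1)%:Z - 1 by lia.
exact: s_lt_r.
Qed.

Theorem main :
  [/\ (0 < I -> forall L : int, 1 <= L -> Ps_TR I Z L < Ps_TR I Z (L + 1)),
      (forall L : int, 1 <= L -> Ps_TR I Z L <= Ps_TU I Z),
      (0 < I -> forall L : int, 1 <= L -> Ps_TR I Z L < Ps_TU I Z) &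
      (forall L : int, 1 <= L -> Ps_TR I Z L < 1)].
Proof.
have E : forall L : int, 1 <= L -> Ps_TR I Z L =
  1 - \sum_(k < Z.+2) c k * (1 - s I L (NN L) (Z.+1 - k)%N 0).
  move=> L hL; apply: PsTR_E; first lia.
  move=> k; have := @NNb L k ltac:(lia); lia.
split.
- move=> Ip L hL.
  rewrite (E L hL) (@PsTR_E (L + 1) (NN L)); [|lia|move=> k; exact: (@NNb L k ltac:(lia))].
  rewrite ltrD2l ltrN2.
  have H : forall k : 'I_Z.+2, c k * (1 - s I (L + 1) (NN L) (Z.+1 - k)%N 0) <
                              c k * (1 - s I L (NN L) (Z.+1 - k)%N 0).
    move=> k; rewrite ltr_pM2l ?c_gt0 // ltrD2l ltrN2.
    apply: s_mono_lt => //; first lia.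
    have := @NNb L k ltac:(lia); lia.
  by apply: sum_lt => [k|]; [apply: ltW|].
- move=> L hL; rewrite (E L hL) PsTU_E lerD2l lerN2.
  apply: ler_sum => k _; apply: ler_wpM2l; first exact: c_ge0.
  by rewrite lerD2l lerN2 sP.
- move=> Ip L hL; rewrite (E L hL) PsTU_E ltrD2l ltrN2.
  apply: sum_lt => [k|]; [apply: ltW|];
  by rewrite ltr_pM2l ?c_gt0 // ltrD2l ltrN2 sP_lt.
- move=> L hL; rewrite (E L hL).
  set S := \sum_(k < Z.+2) _.
  suff h : 0 < S by lra.
  have := @sum_lt _ (fun _ => 0) (fun k => c k * (1 - s I L (NN L) (Z.+1 - k)%N 0)).
  rewrite big1 //; apply.
    move=> k; apply: mulr_ge0; first exact: c_ge0.
    by rewrite subr_ge0 s_le1.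
  apply: mulr_gt0; first exact: c0_gt0.
  by rewrite subr_gt0; apply: s_lt1.
Qed.
End V.
Unset Implicit Arguments.

Theorem corollary1 (R : realType) (I : R) (Z : nat) :
  0 <= I -> I < 1 ->
  [/\ (0 < I -> forall L : int, 1 <= L -> Ps_TR I Z L < Ps_TR I Z (L + 1)),
      (forall L : int, 1 <= L -> Ps_TR I Z L <= Ps_TU I Z),
      (0 < I -> forall L : int, 1 <= L -> Ps_TR I Z L < Ps_TU I Z) &
      (forall L : int, 1 <= L -> Ps_TR I Z L < 1)].
Proof. move=> h0 h1; exact: (@main R I Z h0 h1). Qed.
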